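(* Let $H$ be a discrete subgroup of the $\sigma$-compact locally compact (Hausdorff) group $G$, and let $\theta = \sum_{h\in H} c_h h \in \mathbb{C}H$. If $\sum_h c_h L_h f = 0$ for some nonzero $f \in L^2(G)$, then $\theta \ast k = 0$ for some nonzero $k \in \ell^2(H)$.
   Context: $L^2(G)$ is with respect to left Haar measure and $L_h f(x)=f(h^{-1}x)$. $\mathbb{C}H$ is the group ring of $H$ (finitely many nonzero $c_h$), and for $k=\sum_x b_x x\in\ell^2(H)$, $\theta\ast k=\sum_g\big(\sum_x c_{gx^{-1}}b_x\big)g$. *)

(* Defs.v *)
From HB Require Import structures.
From mathcomp Require Import all_boot all_order all_algebra.
From mathcomp Require Import all_classical all_reals all_analysis.
From mathcomp Require Import complex.
Set Implicit Arguments. Unset Strict Implicit. Unset Printing Implicit Defensive.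
Import Order.TTheory GRing.Theory Num.Theory.
Local Open Scope classical_set_scope.
Local Open Scope ring_scope.

Definition borel (T : ptopologicalType) : Type := g_sigma_algebraType (@open T).
HB.instance Definition _ (T : ptopologicalType) :=
  Topological.on (borel T).

Definition is_group {T : Type} (mul : T -> T -> T) (inv : T -> T) (e : T) :=
  [/\ (forall x y z, mul x (mul y z) = mul (mul x y) z),
      (forall x, mul e x = x), (forall x, mul x e = x),
      (forall x, mul (inv x) x = e) & (forall x, mul x (inv x) = e)].

Definition is_topological_group {T : ptopologicalType}
  (mul : T -> T -> T) (inv : T -> T) (e : T) :=
  [/\ is_group mul inv e, continuous (fun p : T * T => mul p.1 p.2)
    & continuous inv].

Definition sigma_compact (T : ptopologicalType) :=
  exists K : nat -> set T, (forall n, compact (K n)) /\ \bigcup_n K n = [set: T].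

Definition is_subgroup {T : Type} (mul : T -> T -> T) (inv : T -> T) (e : T)
  (H : set T) :=
  [/\ H e, (forall x y, H x -> H y -> H (mul x y)) & (forall x, H x -> H (inv x))].

Definition discrete_subset {T : ptopologicalType} (H : set T) :=
  forall h, H h -> exists U : set T, [/\ open U, U h & U `&` H = [set h]].

Definition left_haar {R : realType} {T : ptopologicalType}
  (mul : T -> T -> T) (mu : {measure set (borel T) -> \bar R}) :=
  [/\ (forall (g : T) (A : set (borel T)), measurable A ->
         mu [set mul g a | a in A] = mu A),
      (forall K : set T, compact K -> (mu K < +oo)%E),
      (forall A : set (borel T), measurable A ->
         mu A = ereal_inf [set mu U | U in [set U : set T | open U /\ A `<=` U]]),
      (forall U : set T, open U ->
         mu U = ereal_sup [set mu K | K in [set K : set T | compact K /\ K `<=` U]])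
    & (0 < mu [set: borel T])%E].

Definition sqnorm {R : realType} (z : R[i]) : R :=
  (complex.Re z) ^+ 2 + (complex.Im z) ^+ 2.

(** f is (a representative of an element of) L^2(G, mu), complex valued. *)
Definition L2 {R : realType} {T : ptopologicalType}
  (mu : {measure set (borel T) -> \bar R}) (f : borel T -> R[i]) :=
  [/\ measurable_fun [set: borel T] (fun x => complex.Re (f x)),
      measurable_fun [set: borel T] (fun x => complex.Im (f x))
    & (\int[mu]_x (sqnorm (f x))%:E < +oo)%E].

Definition l2 {R : realType} {T : choiceType} (H : set T) (k : T -> R[i]) :=
  (\esum_(x in H) (sqnorm (k x))%:E < +oo)%E.

(** theta = sum_h c_h h in CH: finitely many nonzero coefficients, all on H. *)
Definition group_ring_elt {R : realType} {T : Type} (H : set T) (c : T -> R[i]) :=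
  finite_set [set h | c h != 0] /\ [set h | c h != 0] `<=` H.

(** (sum_h c_h L_h f)(x) = sum_h c_h f(h^{-1} x). *)
Definition left_action_sum {R : realType} {T : choiceType}
  (mul : T -> T -> T) (inv : T -> T) (H : set T) (c : T -> R[i]) (f : T -> R[i])
  (x : T) : R[i] :=
  \sum_(h \in H) c h * f (mul (inv h) x).

Definition theta_conv {R : realType} {T : choiceType}
  (mul : T -> T -> T) (inv : T -> T) (H : set T) (c : T -> R[i]) (k : T -> R[i])
  (g : T) : R[i] :=
  \sum_(x \in H) c (mul g (inv x)) * k x.

(* Main.v *)
Require Import Defs.
From HB Require Import structures.
From mathcomp Require Import all_boot all_order all_algebra.
From mathcomp Require Import all_classical all_reals all_analysis.
From mathcomp Require Import complex.
From mathcomp Require Import finmap.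
From mathcomp Require Import measurable_realfun.
Import Order.TTheory GRing.Theory Num.Theory.
Local Open Scope classical_set_scope.
Local Open Scope ring_scope.
Section Prop53.
Variables (R : realType) (T : ptopologicalType) (mul : T -> T -> T) (inv : T -> T) (e : T).
Variable (H : set T).
Hypothesis TG : is_topological_group mul inv e.
Hypothesis sgH : is_subgroup mul inv e H.
Hypothesis dH : discrete_subset H.

Let G : is_group mul inv e. Proof. by case: TG. Qed.
Lemma mulA x y z : mul x (mul y z) = mul (mul x y) z. Proof. by case: G. Qed.
Lemma mul1 x : mul e x = x. Proof. by case: G. Qed.
Lemma mulr1 x : mul x e = x. Proof. by case: G. Qed.
Lemma mulVx x : mul (inv x) x = e. Proof. by case: G. Qed.
Lemma mulxV x : mul x (inv x) = e. Proof. by case: G. Qed.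
Lemma mulKV x y : mul (inv x) (mul x y) = y. Proof. by rewrite mulA mulVx mul1. Qed.
Lemma mulVK x y : mul x (mul (inv x) y) = y. Proof. by rewrite mulA mulxV mul1. Qed.
Lemma mulrK x y : mul (mul y x) (inv x) = y. Proof. by rewrite -mulA mulxV mulr1. Qed.
Lemma mulrVK x y : mul (mul y (inv x)) x = y. Proof. by rewrite -mulA mulVx mulr1. Qed.
Lemma inv_uniq x y : mul x y = e -> y = inv x.
Proof. by move=> xy; rewrite -(mulKV x y) xy mulr1. Qed.
Lemma invK x : inv (inv x) = x. Proof. by apply/esym/inv_uniq/mulVx. Qed.
Lemma invM x y : inv (mul x y) = mul (inv y) (inv x).
Proof. apply/esym/inv_uniq. by rewrite -mulA mulVK mulxV. Qed.
Lemma inv1 : inv e = e. Proof. by rewrite -[inv e]mul1 mulxV. Qed.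
Lemma mul_inj x : injective (mul x).
Proof. by move=> a b ab; rewrite -(mulKV x a) ab mulKV. Qed.

Lemma H1 : H e. Proof. by case: sgH. Qed.
Lemma HM x y : H x -> H y -> H (mul x y). Proof. by case: sgH => _ + _; apply. Qed.
Lemma HV x : H x -> H (inv x). Proof. by case: sgH => _ _; apply. Qed.
Arguments HM {x y}.
Arguments HV {x}.

Lemma cmul2 (f g : T -> T) : continuous f -> continuous g ->
  continuous (fun x => mul (f x) (g x)).
Proof.
move=> cf cg x.
apply: (@continuous_comp _ _ _ (fun x => (f x, g x)) (fun p : T * T => mul p.1 p.2)).
  by apply: cvg_pair; [exact: cf | exact: cg].
by case: TG => _ + _; apply.
Qed.

Lemma cinv : continuous inv. Proof. by case: TG. Qed.
Lemma cid : continuous (@id T). Proof. by move=> x. Qed.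
Lemma ccst (c : T) : continuous (fun _ : T => c). Proof. by move=> x; exact: cvg_cst. Qed.

Lemma exW : exists W : set T, [/\ open W, W e &
  forall a b, W a -> W b -> H (mul a (inv b)) -> mul a (inv b) = e].
Proof.
have [V [oV Ve VH]] := @dH e H1.
have cq : continuous (fun p : T * T => mul p.1 (inv p.2)).
  move=> p.
  apply: (@continuous_comp _ _ _ (fun p : T * T => (p.1, inv p.2)) (fun p : T * T => mul p.1 p.2)).
    apply: cvg_pair; first exact: cvg_fst.
    apply: (@continuous_comp _ _ _ (fun p : T * T => p.2) inv); first exact: cvg_snd.
    exact: cinv.
  by case: TG => _ + _; apply.
have : nbhs ((e, e) : T * T) ((fun p : T * T => mul p.1 (inv p.2)) @^-1` V).
  apply: cq => /=; rewrite inv1 mul1.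
  by apply: open_nbhs_nbhs; split.
case=> -[A1 A2] /= [nA1 nA2] sub.
exists (interior (A1 `&` A2)); split.
- exact: open_interior.
- apply: nbhs_singleton; apply: nbhs_interior; exact: filterI.
- move=> a b /interior_subset [a1 a2] /interior_subset [b1 b2] Hab.
  have : (V `&` H) (mul a (inv b)) by split => //; exact: (sub (a, b)).
  by rewrite VH.
Qed.


Variable W : set T.
Hypothesis oW : open W.
Hypothesis We : W e.
Hypothesis WH : forall a b, W a -> W b -> H (mul a (inv b)) -> mul a (inv b) = e.

Definition S (y : T) : set T := fun x => W (mul x (inv y)).

Lemma S_open y : open (S y).
Proof.
rewrite /S; apply: (@open_comp _ _ (fun x => mul x (inv y)) W) => // x _.
by apply: cmul2; [exact: cid | exact: ccst].
Qed.

Lemma S_self y : S y y. Proof. by rewrite /S mulxV. Qed.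

Lemma S_V y s s' : S y s -> S y s' -> H (mul s (inv s')) -> mul s (inv s') = e.
Proof.
rewrite /S => Ss Ss' Hss.
have := @WH _ _ Ss Ss'.
have -> : mul (mul s (inv y)) (inv (mul s' (inv y))) = mul s (inv s').
  by rewrite invM invK -mulA mulKV.
by apply.
Qed.

Lemma S_disj y h h' s s' : H h -> H h' -> S y s -> S y s' ->
  mul h s = mul h' s' -> h = h'.
Proof.
move=> Hh Hh' Ss Ss' E.
have E2 : mul s' (inv s) = mul (inv h') h.
  have -> : s' = mul (inv h') (mul h s) by rewrite E mulKV.
  by rewrite -mulA mulrK.
have : mul s' (inv s) = e.
  by apply: (@S_V y s' s Ss' Ss); rewrite E2; apply: HM => //; exact: HV.
rewrite E2 => /inv_uniq; by rewrite invK.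
Qed.

Lemma S_sub1 y h h' : H h -> H h' -> S y h -> S y h' -> h = h'.
Proof.
move=> Hh Hh' Sh Sh'.
have := @S_V _ _ _ Sh Sh' (HM Hh (HV Hh')).
by move=> E; rewrite -(mulrVK h' h) E mul1.
Qed.

Variable K : nat -> set T.
Hypothesis Kc : forall n, compact (K n).
Hypothesis Kcov : \bigcup_n K n = [set: T].

Lemma K_cover n : exists D : {fset T}, K n `<=` \bigcup_(y in [set` D]) S y.
Proof.
have := Kc n; rewrite compact_cover => /(_ T [set: T] S).
case.
- by move=> i _; exact: S_open.
- by move=> x _; exists x => //; exact: S_self.
by move=> D' _ sub; exists D'.
Qed.

Lemma HS_finite y : finite_set (H `&` S y).
Proof.
have [[h [Hh Sh]]|] := pselect (exists h, (H `&` S y) h).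
  apply: (@sub_finite_set _ _ [set h]); last exact: finite_set1.
  by move=> h' [Hh' Sh']; rewrite /= (@S_sub1 _ _ _ Hh' Hh Sh' Sh).
move=> nex; apply: (@sub_finite_set _ _ set0); last exact: finite_set0.
by move=> h' Hh'; apply: nex; exists h'.
Qed.

Lemma H_countable : countable H.
Proof.
have -> : H = \bigcup_n (H `&` K n).
  apply/seteqP; split => [x Hx|x [n _ []//]].
  have : [set: T] x by [].
  by rewrite -Kcov => -[n _ Kx]; exists n.
apply: bigcup_countable; first exact: card_lexx.
move=> n _; apply: finite_set_countable.
have [D sub] := K_cover n.
apply: (@sub_finite_set _ _ (\bigcup_(y in [set` D]) (H `&` S y))).
  move=> x [Hx /sub [y Dy Sx]]; by exists y.
apply: bigcup_finite; first exact: finite_fset.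
by move=> y _; exact: HS_finite.
Qed.


Variable mu : {measure set (borel T) -> \bar R}.
Hypothesis haar : forall (g : T) (A : set (borel T)), measurable A ->
  mu [set mul g a | a in A] = mu A.

Lemma meas_open (A : set T) : open A -> measurable (A : set (borel T)).
Proof. by move=> oA; apply: sub_gen_smallest. Qed.

Lemma mfun_cont (phi : T -> T) : continuous phi ->
  measurable_fun [set: borel T] (phi : borel T -> borel T).
Proof.
move=> cphi; apply: (@measurability _ _ (borel T) (borel T) setT phi (@open T)); first by [].
move=> _ [B oB <-]; rewrite setTI; apply: meas_open.
exact: (@open_comp _ _ phi B).
Qed.

Lemma mtrans (h : T) : measurable_fun [set: borel T] (mul h : borel T -> borel T).
Proof. apply: mfun_cont; apply: (@cmul2 (fun=> h) id); [exact: ccst|exact: cid]. Qed.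

Lemma pre_transl h (A : set T) : (mul h) @^-1` A = [set mul (inv h) a | a in A].
Proof.
apply/seteqP; split => [x Ax|_ [a Aa <-]]; first by exists (mul h x) => //; rewrite mulKV.
by rewrite /= mulVK.
Qed.

Lemma mu_pre (h : T) (A : set (borel T)) : measurable A -> mu ((mul h) @^-1` A) = mu A.
Proof. by move=> mA; rewrite pre_transl haar. Qed.

Lemma mpre (h : T) (A : set (borel T)) : measurable A ->
  measurable ((mul h) @^-1` A : set (borel T)).
Proof. move=> mA; have := @mtrans h measurableT _ mA; by rewrite setTI. Qed.

Lemma int_transl (h : T) (D : set (borel T)) (g : borel T -> \bar R) :
  measurable D -> measurable_fun D g -> (forall x, D x -> 0 <= g x)%E ->
  (\int[mu]_(x in (mul h) @^-1` D) g (mul h x) = \int[mu]_(y in D) g y)%E.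
Proof.
move=> mD mg g0.
transitivity (\int[pushforward mu (mul h : borel T -> borel T)]_(y in D) g y)%E; last first.
  apply: eq_measure_integral; first exact: mtrans.
  move=> mh A mA _ /=; rewrite /pushforward.
  have := @mu_pre h A mA. move=> X. exact X.
apply: esym; apply: ge0_integral_pushforward => //.
- exact: mtrans.
- by move=> y /set_mem; exact: g0.
Qed.

Lemma negl_pre (h : T) (N : set (borel T)) : mu.-negligible N ->
  mu.-negligible ((mul h) @^-1` N : set (borel T)).
Proof.
case=> M [mM M0 NM]; exists ((mul h) @^-1` M); split.
- exact: mpre.
- by rewrite mu_pre.
- by move=> x /NM.
Qed.


Variable iota : T -> nat.
Hypothesis iota_inj : {in H &, injective iota}.

Definition Pb n : bool := `[< exists h, H h /\ iota h = n >].
Definition hn n : T := xget e [set h | H h /\ iota h = n].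

Lemma hnP n : Pb n -> H (hn n) /\ iota (hn n) = n.
Proof. by move=> /asboolP ex; apply: (xgetPex e ex). Qed.

Lemma hn_iota h : H h -> hn (iota h) = h.
Proof.
move=> Hh; have [Hh' ih] : H (hn (iota h)) /\ iota (hn (iota h)) = iota h.
  by apply: hnP; apply/asboolP; exists h.
by apply: iota_inj => //; exact: mem_set.
Qed.

Lemma Pb_iota h : H h -> Pb (iota h).
Proof. by move=> Hh; apply/asboolP; exists h. Qed.

Lemma esum_series (a : T -> \bar R) : (forall h, H h -> (0 <= a h)%E) ->
  (\esum_(h in H) a h = \sum_(n <oo) (if Pb n then a (hn n) else 0))%E.
Proof.
move=> a0; rewrite -eseries_mkcond nneseries_esum; last first.
  by move=> n /hnP [Hn _]; exact: a0.
have -> : [set x | Pb x] = [set iota h | h in H].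
  apply/seteqP; split => [n /= /hnP [Hn En]|_ [h Hh <-]]; last exact: Pb_iota.
  by exists (hn n).
rewrite esum_image; last first.
  by move=> x y Hx Hy; apply: iota_inj.
by apply: eq_esum => h Hh; rewrite hn_iota.
Qed.


Variable f : borel T -> R[i].
Hypothesis mRe : measurable_fun [set: borel T] (fun x => complex.Re (f x)).
Hypothesis mIm : measurable_fun [set: borel T] (fun x => complex.Im (f x)).
Hypothesis intf : (\int[mu]_x (sqnorm (f x))%:E < +oo)%E.

Definition phi (x : borel T) : \bar R := (sqnorm (f x))%:E.

Lemma phi_ge0 x : (0 <= phi x)%E.
Proof. by rewrite /phi lee_fin /sqnorm addr_ge0 // sqr_ge0. Qed.

Lemma mphi : measurable_fun [set: borel T] phi.
Proof.
apply/measurable_EFinP; rewrite /sqnorm.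
by apply: measurable_funD; apply: measurable_funX.
Qed.

Lemma mphi_tr (h : T) (D : set (borel T)) : measurable D ->
  measurable_fun D (fun x => phi (mul h x)).
Proof.
move=> mD; apply: (measurable_funS measurableT) => //.
exact: (measurableT_comp mphi (mtrans h)).
Qed.

Definition b n (x : borel T) : \bar R := if Pb n then phi (mul (hn n) x) else 0%E.
Definition Gs (x : borel T) : \bar R := (\sum_(n <oo) b n x)%E.

Lemma Gs_esum x : Gs x = (\esum_(h in H) phi (mul h x))%E.
Proof. by rewrite esum_series // => h _; exact: phi_ge0. Qed.

Lemma b_ge0 n x : (0 <= b n x)%E.
Proof. by rewrite /b; case: ifP => _ //; exact: phi_ge0. Qed.

Lemma mb n (D : set (borel T)) : measurable D -> measurable_fun D (b n).
Proof.
move=> mD; rewrite /b; case: (Pb n); [exact: mphi_tr | exact: measurable_cst].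
Qed.

Definition Fn y n : set (borel T) :=
  if Pb n then (mul (inv (hn n))) @^-1` (S y) else set0.

Lemma mS y : measurable (S y : set (borel T)).
Proof. apply: meas_open; exact: S_open. Qed.

Lemma mFn y n : measurable (Fn y n).
Proof. rewrite /Fn; case: (Pb n); [apply: mpre; exact: mS | exact: measurable0]. Qed.

Lemma int_b y n : (\int[mu]_(x in S y) b n x = \int[mu]_(x in Fn y n) phi x)%E.
Proof.
rewrite /b /Fn; case: ifP => _; last by rewrite integral0 integral_set0.
rewrite -[RHS](int_transl (hn n)); last 3 first.
- apply: mpre; exact: mS.
- apply: (measurable_funS measurableT) => //; exact: mphi.
- by move=> x _; exact: phi_ge0.
congr (integral _ _ _); apply/funext => x /=; by rewrite mulKV.
Qed.

Lemma triv_Fn y : trivIset [set: nat] (Fn y).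
Proof.
move=> i j _ _ [x []]; rewrite /Fn.
case: ifP => Pi; last by [].
case: ifP => Pj; last by [].
move=> /= Si Sj.
have [Hi Ei] := hnP i Pi; have [Hj Ej] := hnP j Pj.
have := @S_disj y (hn i) (hn j) _ _ Hi Hj Si Sj.
rewrite !mulVK => /(_ erefl) hij.
by rewrite -Ei -Ej hij.
Qed.

Lemma int_Gs y : (\int[mu]_(x in S y) Gs x < +oo)%E.
Proof.
rewrite /Gs integral_nneseries //; last 3 first.
- exact: mS.
- by move=> n; apply: mb; exact: mS.
- by move=> n x _; exact: b_ge0.
under eq_eseriesr => n _ do rewrite int_b.
rewrite -ge0_integral_bigcup //; last 4 first.
- exact: mFn.
- apply: (measurable_funS measurableT) => //; exact: mphi.
- by move=> x _; exact: phi_ge0.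
- exact: triv_Fn.
apply: le_lt_trans intf; apply: ge0_subset_integral => //.
- by apply: bigcupT_measurable => n; exact: mFn.
- exact: mphi.
- by move=> x _; exact: phi_ge0.
Qed.


Lemma mGs (D : set (borel T)) : measurable D -> measurable_fun D Gs.
Proof.
move=> mD; rewrite /Gs.
have := (@ge0_emeasurable_sum _ (borel T) R D b xpredT
  (fun k x _ _ => b_ge0 k x) (fun k _ => mb k D mD)).
apply: eq_measurable_fun => x _; exact: eq_eseriesl.
Qed.

Lemma Gs_ge0 x : (0 <= Gs x)%E.
Proof. by apply: nneseries_ge0 => n _ _; exact: b_ge0. Qed.

Lemma B2_S y : mu.-negligible ([set x | ~ (Gs x < +oo)%E] `&` S y : set (borel T)).
Proof.
have ig : mu.-integrable (S y) Gs.
  apply/integrableP; split; first by apply: mGs; exact: mS.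
  apply: le_lt_trans (int_Gs y); rewrite le_eqVlt; apply/orP; left; apply/eqP.
  by apply: eq_integral => x _; rewrite gee0_abs //; exact: Gs_ge0.
have := integrable_ae (mS y) ig.
case=> N [mN N0 sub]; exists N; split => //.
move=> x [/= nlt Sx]; apply: sub => /= fin.
by apply: nlt; have := fin Sx; rewrite ge0_fin_numE //; exact: Gs_ge0.
Qed.


Lemma negl_cover (B : set T) : (forall y, mu.-negligible (B `&` S y : set (borel T))) ->
  mu.-negligible (B : set (borel T)).
Proof.
move=> nB.
have -> : B = \bigcup_n (B `&` K n).
  apply/seteqP; split => [x Bx|x [n _ []//]].
  have : [set: T] x by [].
  by rewrite -Kcov => -[n _ Kx]; exists n.
apply: negligible_bigcup => n.
have [D sub] := K_cover n.
apply: (@negligibleS _ _ _ _ (\bigcup_(y in [set` D]) (B `&` S y) : set (borel T))).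
  by move=> x [Bx /sub [y Dy Sx]]; exists y.
rewrite bigcup_fset.
elim: (finmap.enum_fset D) => [|y s IH]; first by rewrite big_nil; exact: negligible_set0.
by rewrite big_cons; apply: negligibleU.
Qed.

Variable c : T -> R[i].
Definition LAS x := left_action_sum mul inv H c f x.

Lemma B1_negl : {ae mu, forall x, LAS x = 0} ->
  mu.-negligible (~` [set x | forall g, H g -> LAS (mul g x) = 0] : set (borel T)).
Proof.
move=> ae0.
have N0 : mu.-negligible (~` [set x | LAS x = 0] : set (borel T)) by exact: ae0.
apply: (@negligibleS _ _ _ _ (\bigcup_n (if Pb n then (mul (hn n)) @^-1` (~` [set x | LAS x = 0]) else set0) : set (borel T))).
  move=> x /= /existsNP [g /not_implyP [Hg ng]].
  exists (iota g) => //.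
  by rewrite Pb_iota // hn_iota.
apply: negligible_bigcup => n; case: (Pb n); last exact: negligible_set0.
exact: negl_pre.
Qed.

Lemma conv_las x g : H g ->
  theta_conv mul inv H c (fun z => f (mul z x)) g = LAS (mul g x).
Proof.
move=> Hg; rewrite /theta_conv /LAS /left_action_sum.
rewrite (@reindex_fsbig _ _ _ _ _ (fun h => mul (inv h) g) H H); last first.
  split.
  - by move=> h Hh; apply: HM => //; exact: HV.
  - move=> h h' _ _ /= E.
    have : inv h = inv h' by rewrite -(mulrK g (inv h)) E mulrK.
    by move=> /(congr1 inv); rewrite !invK.
  - move=> z Hz; exists (mul g (inv z)); first by apply: HM => //; exact: HV.
    by rewrite invM invK mulrVK.
apply: eq_fsbigr => h _.
by rewrite invM invK mulVK -mulA.
Qed.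

End Prop53.
Theorem proposition5p3 (R : realType) (T : ptopologicalType)
  (mul : T -> T -> T) (inv : T -> T) (e : T)
  (mu : {measure set (borel T) -> \bar R}) (H : set T) (c : T -> R[i]) :
  is_topological_group mul inv e ->
  hausdorff_space T ->
  locally_compact [set: T] ->
  sigma_compact T ->
  left_haar mul mu ->
  is_subgroup mul inv e H ->
  discrete_subset H ->
  group_ring_elt H c ->
  (exists f : borel T -> R[i],
      [/\ L2 mu f, ~ {ae mu, forall x, f x = 0}
        & {ae mu, forall x, left_action_sum mul inv H c f x = 0}]) ->
  exists k : T -> R[i],
    [/\ l2 H k, (exists x, H x /\ k x != 0)
      & forall g, H g -> theta_conv mul inv H c k g = 0].
Proof.
move=> TG _ _ [K [Kc Kcov]] [haar _ _ _ _] sgH dH _ [f [[mRe mIm intf] nz ae0]].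
have [W [oW We WH]] := @exW T mul inv e H TG sgH dH.
have /countable_injP [iota iota_inj] := @H_countable T mul inv e H TG sgH W oW We WH K Kc Kcov.
set B1 := ~` [set x | forall g, H g -> LAS R T mul inv H f c (mul g x) = 0].
set B2 := [set x | ~ (Gs R T mul e H iota f x < +oo)%E].
have nB1 : mu.-negligible (B1 : set (borel T)).
  exact: (@B1_negl R T mul inv e H TG mu haar iota iota_inj f c ae0).
have nB2 : mu.-negligible (B2 : set (borel T)).
  apply: (@negl_cover R T mul inv e TG W oW We K Kc Kcov mu B2) => y.
  exact: (@B2_S R T mul inv e H TG sgH W oW WH mu haar iota f mRe mIm intf y).
have [x [fx [nb1 nb2]]] : exists x, f x != 0 /\ ~ B1 x /\ ~ B2 x.
  apply: contrapT => nex; apply: nz.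
  apply: (@negligibleS _ _ _ _ (B1 `|` B2 : set (borel T))); last exact: negligibleU.
  move=> y /= fy; apply: contrapT => nU; apply: nex; exists y; split.
    by apply/eqP.
  by split => ?; apply: nU; [left|right].
exists (fun z => f (mul z x)); split.
- rewrite /l2; have := contrapT nb2; rewrite /= Gs_esum //.
- by exists e; split; [exact: H1 sgH | rewrite (@mul1 T mul inv e TG)].
- move=> g Hg; rewrite (@conv_las R T mul inv e H TG sgH f c x g Hg).
  by have := contrapT nb1; apply.
Qed.
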